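(* Let $n\ge2$ and let $\mathbf{r}$ be an $\mathbb{R}^n$-valued random vector with $\mathbb{E}|r_i|<\infty$ for all $i$; set $\mathbf{R}=e^{\mathbf{r}}$ (componentwise), $\mathbf{m}=\mathbb{E}[\mathbf{r}]$, and $J(\boldsymbol{\pi})=\mathbb{E}[\gamma(\boldsymbol{\pi},\mathbf{r})]=\mathbb{E}[\log\langle\boldsymbol{\pi},\mathbf{R}\rangle]-\langle\boldsymbol{\pi},\mathbf{m}\rangle$ for $\boldsymbol{\pi}\in\Delta_n$ (which is finite). Then $\boldsymbol{\pi}^\star\in\Delta_n$ maximizes $J$ over $\Delta_n$ if and only if $$\mathbb{E}\Big[\frac{\langle\boldsymbol{\pi},\mathbf{R}\rangle}{\langle\boldsymbol{\pi}^\star,\mathbf{R}\rangle}\Big]\le1+\langle\boldsymbol{\pi}-\boldsymbol{\pi}^\star,\mathbf{m}\rangle\quad\text{for every }\boldsymbol{\pi}\in\Delta_n,$$ with equality for every $\boldsymbol{\pi}\in\Delta_n$ satisfying $\supp(\boldsymbol{\pi})\subseteq\supp(\boldsymbol{\pi}^\star)$.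
   Context: $\Delta_n=\{\mathbf{x}\in[0,1]^n:\sum_ix_i=1\}$; $\supp(\mathbf{x})=\{i:x_i>0\}$. For $\boldsymbol{\pi}\in\Delta_n$ and $\mathbf{r}\in\mathbb{R}^n$, $\gamma(\boldsymbol{\pi},\mathbf{r})=\log\big(\sum_{i\in\supp(\boldsymbol{\pi})}\pi_ie^{r_i}\big)-\sum_{i\in\supp(\boldsymbol{\pi})}\pi_ir_i$. The expectation of a nonnegative random variable may equal $+\infty$. *)

(* Defs.v *)
From HB Require Import structures.
From mathcomp Require Import all_boot all_order all_algebra.
From mathcomp Require Import all_classical all_reals all_analysis.
Set Implicit Arguments. Unset Strict Implicit. Unset Printing Implicit Defensive.
Import Order.TTheory GRing.Theory Num.Theory.
Local Open Scope ring_scope.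

Definition simplex (R : realType) (n : nat) (x : 'I_n -> R) : Prop :=
  (forall i, 0 <= x i) /\ \sum_(i < n) x i = 1.

Definition supp_sub (R : realType) (n : nat) (x y : 'I_n -> R) : Prop :=
  forall i, 0 < x i -> 0 < y i.

Definition dotv (R : realType) (n : nat) (x y : 'I_n -> R) : R :=
  \sum_(i < n) x i * y i.

Definition gamma (R : realType) (n : nat) (p r : 'I_n -> R) : R :=
  ln (\sum_(i < n | 0 < p i) p i * expR (r i)) - \sum_(i < n | 0 < p i) p i * r i.

Definition expv (R : realType) (n : nat) (r : 'I_n -> R) : 'I_n -> R :=
  fun i => expR (r i).

Section Obj.
Context (d : measure_display) (T : measurableType d) (R : realType)
  (P : probability T R) (n : nat) (r : T -> 'I_n -> R).

Definition meanv : 'I_n -> R := fun i => fine (\int[P]_x (r x i)%:E).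

Definition Jobj (p : 'I_n -> R) : \bar R := \int[P]_x (gamma p (r x))%:E.
End Obj.

(* Main.v *)
Require Import Defs.
From HB Require Import structures.
From mathcomp Require Import all_boot all_order all_algebra.
From mathcomp Require Import all_classical all_reals all_analysis.
From mathcomp Require Import measurable_realfun.
From mathcomp Require Import ring lra.
Set Implicit Arguments. Unset Strict Implicit.
Import Order.TTheory GRing.Theory Num.Theory.
Local Open Scope ring_scope.

Section Alg.
Context (R : realType) (n : nat).
Implicit Types (p q z : 'I_n -> R).

Lemma dotv_lin p q a b z : dotv (fun i => a * p i + b * q i) z = a * dotv p z + b * dotv q z.
Proof.
rewrite /dotv !mulr_sumr -big_split /=; apply: eq_bigr => i _.
by rewrite mulrDl !mulrA.
Qed.

Lemma dotvB p q z : dotv (fun i => p i - q i) z = dotv p z - dotv q z.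
Proof.
by rewrite /dotv -sumrB; apply: eq_bigr => i _; rewrite mulrBl.
Qed.

Lemma simplex_le1 p : simplex p -> forall i, p i <= 1.
Proof.
move=> [p0 p1] i; rewrite -p1 (bigD1 i) //= lerDl.
by apply: sumr_ge0 => j _.
Qed.

Lemma gammaE p z : simplex p -> gamma p z = ln (dotv p (expv z)) - dotv p z.
Proof.
move=> [p0 _]; rewrite /gamma /dotv /expv.
rewrite (big_mkcond (fun i => 0 < p i)) [X in _ - X](big_mkcond (fun i => 0 < p i)).
have Z i : ~~ (0 < p i) -> p i = 0.
  by move=> hp; apply/eqP; rewrite eq_le p0 andbT leNgt.
congr (ln _ - _); apply: eq_bigr => i _; case: ifPn => // /Z ->; by rewrite mul0r.
Qed.

Lemma Dbounds p z : simplex p ->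
  expR (- \sum_(i < n) `|z i|) <= dotv p (expv z) <= expR (\sum_(i < n) `|z i|).
Proof.
move=> [p0 p1]; have zb i : `|z i| <= \sum_(j < n) `|z j|.
  by rewrite (bigD1 i) //= lerDl; apply: sumr_ge0.
apply/andP; split.
  rewrite -[X in X <= _]mul1r -p1 mulr_suml /dotv; apply: ler_sum => i _.
  apply: ler_wpM2l => //; rewrite /expv ler_expR.
  by rewrite lerNl; apply: le_trans (zb i); rewrite -normrN ler_norm.
rewrite -[X in _ <= X]mul1r -p1 mulr_suml /dotv; apply: ler_sum => i _.
apply: ler_wpM2l => //; rewrite /expv ler_expR.
by apply: le_trans (zb i); rewrite ler_norm.
Qed.

Lemma Dpos p z : simplex p -> 0 < dotv p (expv z).
Proof. by move=> sp; case/andP: (Dbounds z sp) => + _; apply: lt_le_trans; rewrite expR_gt0. Qed.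

Lemma lnD_bound p z : simplex p -> `|ln (dotv p (expv z))| <= \sum_(i < n) `|z i|.
Proof.
move=> sp; have /andP[h1 h2] := Dbounds z sp; have hp := Dpos z sp.
rewrite ler_norml; apply/andP; split.
  by rewrite -[X in X <= _]expRK ler_ln ?posrE ?expR_gt0.
by rewrite -[X in _ <= X]expRK ler_ln ?posrE ?expR_gt0.
Qed.

End Alg.

Section S.
Context (d : measure_display) (T : measurableType d) (R : realType)
  (P : probability T R) (n : nat) (r : T -> 'I_n -> R)
  (hint : forall i : 'I_n, P.-integrable setT (fun x => (r x i)%:E)).

Lemma mr i : measurable_fun setT (fun x => r x i).
Proof. by apply/measurable_EFinP; exact: (measurable_int _ (hint i)). Qed.

Lemma mdot (p : 'I_n -> R) (f : T -> 'I_n -> R) :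
  (forall i, measurable_fun setT (fun x => f x i)) ->
  measurable_fun setT (fun x => dotv p (f x)).
Proof.
move=> hf; rewrite /dotv.
apply: measurable_sum => i; apply: measurable_funM => //; exact: hf.
Qed.

Lemma mexpv i : measurable_fun setT (fun x => expv (r x) i).
Proof. exact: measurableT_comp (@measurable_expR R) (mr i). Qed.

Definition S x := \sum_(i < n) `|r x i|.

Lemma Sint : P.-integrable setT (EFin \o S).
Proof.
rewrite /S.
have -> : EFin \o (fun x => \sum_(i < n) `|r x i|) = (fun x => \sum_(i < n) (`|r x i|)%:E)%E.
  by apply/funext => x /=; rewrite sumEFin.
apply: (integrable_sum measurableT) => i _.
exact: (integrable_norm (D:=setT) (f:=fun x => r x i) (hint i)).
Qed.

Definition Dv p x := dotv p (expv (r x)).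

Lemma mD p : measurable_fun setT (Dv p).
Proof. exact: mdot mexpv. Qed.

Lemma mlnD p : measurable_fun setT (fun x => ln (Dv p x)).
Proof. exact: measurableT_comp (@measurable_ln R) (mD p). Qed.

Lemma intlnD p : simplex p -> P.-integrable setT (EFin \o (fun x => ln (Dv p x))).
Proof.
move=> sp; apply: (le_integrable measurableT _ _ Sint).
  exact/measurable_EFinP/mlnD.
move=> x _ /=; rewrite lee_fin /S [X in _ <= X]ger0_norm ?sumr_ge0 //.
by rewrite /Dv; exact: lnD_bound.
Qed.

Lemma intdot p : P.-integrable setT (EFin \o (fun x => dotv p (r x))).
Proof.
have -> : EFin \o (fun x => dotv p (r x)) = (fun x => \sum_(i < n) ((p i)%:E * (r x i)%:E))%E.
  by apply/funext => x /=; rewrite /dotv sumEFin.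
apply: (integrable_sum measurableT) => i _.
exact: (integrableZl measurableT (p i) (hint i)).
Qed.

Lemma Efin_int (f : T -> R) : P.-integrable setT (EFin \o f) ->
  (\int[P]_x (f x)%:E = (Rintegral P setT f)%:E)%E.
Proof. by move=> h; rewrite /Rintegral fineK //; exact: integrable_fin_num h. Qed.

Lemma Rint_dot p : Rintegral P setT (fun x => dotv p (r x)) = dotv p (meanv P r).
Proof.
rewrite /Rintegral.
have -> : (\int[P]_x (dotv p (r x))%:E = \sum_(i < n) ((p i)%:E * \int[P]_x (r x i)%:E))%E.
  under eq_integral do rewrite /dotv -sumEFin.
  rewrite (integral_sum measurableT); last by move=> i; exact: (integrableZl measurableT (p i) (hint i)).
  by apply: eq_bigr => i _; under eq_integral do rewrite EFinM; rewrite integralZl.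
rewrite /dotv /meanv.
have fin i : (\int[P]_x (r x i)%:E)%E \is a fin_num by exact: integrable_fin_num (hint i).
under eq_bigr => i _ do rewrite -(fineK (fin i)) -EFinM.
by rewrite sumEFin.
Qed.

Lemma JobjE p : simplex p ->
  Jobj P r p = (Rintegral P setT (fun x => ln (Dv p x)) - dotv p (meanv P r))%:E.
Proof.
move=> sp; rewrite /Jobj.
under eq_integral do rewrite gammaE //.
rewrite Efin_int; last first.
  have h := integrableB measurableT (intlnD sp) (intdot p).
  by apply: eq_integrable h => // x _; rewrite /= EFinB.
by rewrite RintegralB //; [rewrite Rint_dot | exact: intlnD | exact: intdot].
Qed.

End S.

Section S2.
Context (d : measure_display) (T : measurableType d) (R : realType)
  (P : probability T R).

Lemma int_aff (f : T -> R) a b : P.-integrable setT (EFin \o f) ->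
  P.-integrable setT (EFin \o (fun x => a * f x + b)).
Proof.
move=> h.
have h2 := integrableD measurableT (integrableZl measurableT a h)
   (finite_measure_integrable_cst P b measurableT).
by apply: eq_integrable h2 => // x _; rewrite /= EFinD EFinM.
Qed.

Lemma Rint_aff (f : T -> R) a b : P.-integrable setT (EFin \o f) ->
  Rintegral P setT (fun x => a * f x + b) = a * Rintegral P setT f + b.
Proof.
move=> h; rewrite RintegralD //; last exact: finite_measure_integrable_cst.
  rewrite RintegralZl // Rintegral_cst //.
  have H1 : fine (P [set: T]%classic) = 1 by rewrite probability_setT.
  by rewrite H1 mulr1.
have h2 := integrableZl measurableT a h.
by apply: eq_integrable h2 => // x _; rewrite /= EFinM.
Qed.

End S2.

Section S3.
Context (d : measure_display) (T : measurableType d) (R : realType)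
  (P : probability T R) (n : nat) (r : T -> 'I_n -> R)
  (hint : forall i : 'I_n, P.-integrable setT (fun x => (r x i)%:E))
  (pstar : 'I_n -> R) (hps : simplex pstar).

Definition Q p x := Dv r p x / Dv r pstar x.

Lemma Dvpos p x : simplex p -> 0 < Dv r p x.
Proof. by move=> sp; rewrite /Dv; exact: Dpos. Qed.

Lemma Q0 p x : simplex p -> 0 <= Q p x.
Proof. by move=> sp; rewrite /Q divr_ge0 // ltW // Dvpos. Qed.

Lemma lnQ p x : simplex p -> ln (Q p x) = ln (Dv r p x) - ln (Dv r pstar x).
Proof. by move=> sp; rewrite /Q ln_div // posrE Dvpos. Qed.

Lemma mQ p : simplex p -> measurable_fun setT (Q p).
Proof.
move=> sp.
have -> : Q p = fun x => expR (ln (Dv r p x) - ln (Dv r pstar x)).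
  by apply/funext => x; rewrite -lnQ // lnK // posrE /Q divr_gt0 // Dvpos.
apply: measurableT_comp => //; apply: measurable_funB; exact: mlnD hint _.
Qed.

Lemma Qint p : simplex p -> (\int[P]_x (Q p x)%:E < +oo)%E ->
  P.-integrable setT (EFin \o Q p).
Proof.
move=> sp h; apply/integrableP; split; first exact/measurable_EFinP/mQ.
apply: le_lt_trans h; rewrite le_eqVlt; apply/orP; left; apply/eqP; apply: eq_integral => x _ /=.
by rewrite ger0_norm // Q0.
Qed.

Lemma Qpos p x : simplex p -> 0 < Q p x.
Proof. by move=> sp; rewrite /Q divr_gt0 // Dvpos. Qed.

Lemma intB (f g : T -> R) : P.-integrable setT (EFin \o f) -> P.-integrable setT (EFin \o g) ->
  P.-integrable setT (EFin \o (fun x => f x - g x)).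
Proof.
move=> hf hg; have h := integrableB measurableT hf hg.
by apply: eq_integrable h => // x _; rewrite /= EFinB.
Qed.

Lemma ln_le_sub1 (x : R) : 0 < x -> ln x <= x - 1.
Proof.
move=> x0; rewrite -[X in ln X](subrK 1 x) addrC; apply: le_ln1Dx.
by rewrite ltrBrDl subrr.
Qed.

Lemma dirA : (forall p, simplex p ->
  (\int[P]_x (Q p x)%:E <= (1 + dotv (fun i => p i - pstar i) (meanv P r))%:E)%E) ->
  forall p, simplex p -> (Jobj P r p <= Jobj P r pstar)%E.
Proof.
move=> H p sp; have Hp := H p sp.
have hf : (\int[P]_x (Q p x)%:E < +oo)%E by apply: le_lt_trans Hp (ltey _).
have iQ := Qint sp hf.
rewrite Efin_int // lee_fin dotvB in Hp.
rewrite !JobjE // lee_fin.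
have key : Rintegral P setT (fun x => ln (Dv r p x)) - Rintegral P setT (fun x => ln (Dv r pstar x))
   <= Rintegral P setT (Q p) - 1.
  rewrite -RintegralB //; try exact: intlnD.
  have <- : Rintegral P setT (fun x => 1 * Q p x + -1) = Rintegral P setT (Q p) - 1.
    by rewrite Rint_aff // mul1r.
  apply: le_Rintegral => //.
  - by apply: intB; exact: intlnD.
  - exact: int_aff.
  move=> x _; rewrite -lnQ // mul1r; exact/ln_le_sub1/Qpos.
lra.
Qed.

End S3.

Lemma mix_simplex (R : realType) n (p q : 'I_n -> R) a : simplex p -> simplex q -> 0 <= a <= 1 ->
  simplex (fun i => (1 - a) * p i + a * q i).
Proof.
move=> [p0 p1] [q0 q1] /andP[a0 a1]; split.
  by move=> i; rewrite addr_ge0 // mulr_ge0 // subr_ge0.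
by rewrite big_split /= -!mulr_sumr p1 q1 !mulr1 subrK.
Qed.

Section S4.
Context (d : measure_display) (T : measurableType d) (R : realType)
  (P : probability T R) (n : nat) (r : T -> 'I_n -> R)
  (hint : forall i : 'I_n, P.-integrable setT (fun x => (r x i)%:E))
  (pstar : 'I_n -> R) (hps : simplex pstar).

Lemma claim1 : (forall p, simplex p -> (Jobj P r p <= Jobj P r pstar)%E) ->
  forall p, simplex p -> forall t, 0 <= t <= 1 ->
  P.-integrable setT (EFin \o (fun x => ln (1 - t + t * Q r pstar p x))) /\
  Rintegral P setT (fun x => ln (1 - t + t * Q r pstar p x))
    <= t * dotv (fun i => p i - pstar i) (meanv P r).
Proof.
move=> H p sp t t01.
have spt := mix_simplex hps sp t01.
set pt := (fun i => _) in spt.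
have E : (fun x => ln (1 - t + t * Q r pstar p x)) = (fun x => ln (Dv r pt x) - ln (Dv r pstar x)).
  apply/funext => x; rewrite -lnQ //; congr ln.
  rewrite /Q /Dv /pt dotv_lin; field.
  by rewrite gt_eqF // Dpos.
rewrite E; split; first by apply: intB; exact: intlnD.
have := H _ spt; rewrite !JobjE // lee_fin /pt dotv_lin dotvB.
rewrite RintegralB //; try exact: intlnD.
move=> h; nra.
Qed.

End S4.

Lemma pw (R : realType) (q M t : R) : 0 <= q -> 0 <= M -> 0 < t -> t <= 1/2 ->
  t * Num.min q M + (- t - 2 * (t^+2 * (M+1)^+2)) <= ln (1 - t + t * q).
Proof.
move=> q0 M0 t0 th.
set y := Num.min q M.
have y0 : 0 <= y by rewrite le_min q0 M0.
have yq : y <= q by rewrite ge_min lexx.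
have yM : y <= M by rewrite ge_min lexx orbT.
set z := 1 - t + t * y.
have zh : 1/2 <= z.
  have : 0 <= t * y by rewrite mulr_ge0 // ltW.
  rewrite /z; lra.
have z0 : 0 < z by lra.
have lnz : ln z <= ln (1 - t + t * q).
  have tyq : t * y <= t * q by rewrite ler_wpM2l // ltW.
  rewrite ler_ln // ?posrE; rewrite /z in z0 *; lra.
have zi0 : 0 < z^-1 by rewrite invr_gt0.
have l1 : 1 - z^-1 <= ln z.
  have := ln_le_sub1 zi0; rewrite lnV ?posrE //; lra.
have key : (z - 1) - 2 * (z-1)^+2 <= 1 - z^-1.
  have eq : 1 - z^-1 - ((z - 1) - 2 * (z-1)^+2) = z^-1 * (z-1)^+2 * (2*z - 1).
    by field; rewrite gt_eqF.
  rewrite -subr_ge0 eq; apply: mulr_ge0; last lra.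
  by apply: mulr_ge0; [exact: ltW | exact: sqr_ge0].
have sq : (z-1)^+2 <= t^+2 * (M+1)^+2.
  have -> : z - 1 = t * (y - 1) by rewrite /z; ring.
  rewrite exprMn; apply: ler_wpM2l; first exact: sqr_ge0.
  rewrite -subr_ge0.
  have -> : (M+1)^+2 - (y-1)^+2 = (M - y + 2)*(M + y) by ring.
  apply: mulr_ge0; lra.
have zdef : z = 1 - t + t * y by [].
lra.
Qed.

Section S5.
Context (d : measure_display) (T : measurableType d) (R : realType)
  (P : probability T R) (n : nat) (r : T -> 'I_n -> R)
  (hint : forall i : 'I_n, P.-integrable setT (fun x => (r x i)%:E))
  (pstar : 'I_n -> R) (hps : simplex pstar).

Lemma claim2 : (forall p, simplex p -> (Jobj P r p <= Jobj P r pstar)%E) ->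
  forall p, simplex p -> forall M : R, 0 <= M ->
  P.-integrable setT (EFin \o (fun x => Num.min (Q r pstar p x) M)) /\
  Rintegral P setT (fun x => Num.min (Q r pstar p x) M)
    <= 1 + dotv (fun i => p i - pstar i) (meanv P r).
Proof.
move=> H p sp M M0.
set c := dotv _ _.
set Y := fun x => _.
have mY : measurable_fun setT Y.
  exact: (measurable_minr (mQ hint hps sp) (measurable_cst M)).
have iY : P.-integrable setT (EFin \o Y).
  apply: (le_integrable measurableT _ _ (finite_measure_integrable_cst P M measurableT)).
    exact/measurable_EFinP.
  move=> x _ /=.
  have Y0 : 0 <= Y x by rewrite /Y le_min M0 Q0.
  have YM : Y x <= M by rewrite /Y ge_min lexx orbT.
  by rewrite lee_fin (ger0_norm Y0) (ger0_norm M0).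
split => //.
apply/ler_addgt0Pr => e e0.
set K := (M+1)^+2.
have K0 : 0 < K by rewrite exprn_gt0 //; lra.
set t := Num.min (1/2) (e / (2*K)).
have t0 : 0 < t.
  have h2K : 0 < 2 * K by rewrite mulr_gt0.
  rewrite lt_min; apply/andP; split; [lra | by rewrite divr_gt0].
have th : t <= 1/2 by rewrite ge_min lexx.
have te : 2 * t * K <= e.
  have : t <= e / (2 * K) by rewrite ge_min lexx orbT.
  have h2K : 0 < 2 * K by rewrite mulr_gt0.
  by rewrite ler_pdivlMr // => h; lra.
have t01 : 0 <= t <= 1 by apply/andP; split; lra.
have [i1 h1] := claim1 hint hps H sp t01.
have low : Rintegral P setT (fun x => t * Y x + (- t - 2 * (t^+2 * K)))
    <= Rintegral P setT (fun x => ln (1 - t + t * Q r pstar p x)).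
  apply: le_Rintegral => //; first exact: int_aff.
  move=> x _; apply: pw => //; exact: Q0.
rewrite Rint_aff // in low.
have h2 : t * (Rintegral P setT Y - 1 - c - 2 * t * K) <= 0.
  have -> : t * (Rintegral P setT Y - 1 - c - 2 * t * K) =
    (t * Rintegral P setT Y + (- t - 2 * (t^+2 * K))) - t * c by ring.
  rewrite -/c in h1; lra.
rewrite pmulr_rle0 // in h2; lra.
Qed.

Lemma claim3 : (forall p, simplex p -> (Jobj P r p <= Jobj P r pstar)%E) ->
  forall p, simplex p ->
  (\int[P]_x (Q r pstar p x)%:E <= (1 + dotv (fun i => p i - pstar i) (meanv P r))%:E)%E.
Proof.
move=> H p sp.
pose g := fun (k : nat) x => (Num.min (Q r pstar p x) k%:R)%:E.
have mg k : measurable_fun setT (g k).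
  apply/measurable_EFinP.
  exact: (measurable_minr (mQ hint hps sp) (measurable_cst (k%:R : R))).
have g0 k x : (@setT T) x -> (0 <= g k x)%E.
  by move=> _; rewrite /g lee_fin le_min Q0 // ler0n.
have ndg x : (@setT T) x -> {homo g^~ x : a b / (a <= b)%N >-> (a <= b)%E}.
  move=> _ a b ab; rewrite lee_fin le_min ge_min lexx /= ge_min ler_nat ab orbT.
  by [].
have lim x : limn (g^~ x) = (Q r pstar p x)%:E.
  apply: cvg_lim => //; apply: cvg_near_cst.
  exists (Num.trunc (Q r pstar p x)).+1 => // k /= hk.
  rewrite /g min_l //; apply: ltW; apply: lt_le_trans (truncnS_gt _) _.
  by rewrite ler_nat.
have HC := cvg_monotone_convergence (mu:=P) measurableT mg g0 ndg.
have E : (\int[P]_x (Q r pstar p x)%:E = \int[P]_x limn (g^~ x))%E.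
  by apply: eq_integral => x _; rewrite lim.
rewrite E -(cvg_lim _ HC) //.
apply: lime_le; first by apply/cvg_ex; eexists; exact: HC.
apply: nearW => k.
have [ik hk] := claim2 H sp (ler0n R k).
by rewrite /g Efin_int // lee_fin.
Qed.

End S5.

Section S6.
Context (d : measure_display) (T : measurableType d) (R : realType)
  (P : probability T R) (n : nat) (r : T -> 'I_n -> R)
  (hint : forall i : 'I_n, P.-integrable setT (fun x => (r x i)%:E))
  (pstar : 'I_n -> R) (hps : simplex pstar).

Lemma part2 : (forall p, simplex p ->
  (\int[P]_x (Q r pstar p x)%:E <= (1 + dotv (fun i => p i - pstar i) (meanv P r))%:E)%E) ->
  forall p, simplex p -> supp_sub p pstar ->
  (\int[P]_x (Q r pstar p x)%:E = (1 + dotv (fun i => p i - pstar i) (meanv P r))%:E)%E.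
Proof.
move=> H1 p sp hsub.
set s := \prod_(i < n | 0 < pstar i) pstar i.
have s0 : 0 < s by apply: prodr_gt0.
have spi i : 0 < pstar i -> s <= pstar i.
  move=> hi; rewrite /s (bigD1 i) //= -[X in _ <= X]mulr1; apply: ler_wpM2l; first exact: ltW.
  by apply: prodr_ile1 => j /andP[hj _]; rewrite ltW //= simplex_le1.
pose p' := fun i => (1 - (- s)) * pstar i + (- s) * p i.
have sp' : simplex p'.
  case: hps => [ps0 ps1]; case: sp => [p0 p1]; split.
    move=> i; rewrite /p'; have [hi|hi] := boolP (0 < pstar i).
      have := spi i hi; have := simplex_le1 (conj p0 p1) i; have := p0 i; nra.
    have e0 : pstar i = 0 by apply/eqP; rewrite eq_le ps0 andbT leNgt.
    have e1 : p i = 0.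
      apply/eqP; rewrite eq_le p0 andbT leNgt; apply/negP => /hsub.
      by rewrite e0 ltxx.
    by rewrite e0 e1 !mulr0 addr0.
  by rewrite /p' big_split /= -!mulr_sumr ps1 p1; ring.
have Hp := H1 p sp.
have hf : (\int[P]_x (Q r pstar p x)%:E < +oo)%E by apply: le_lt_trans Hp (ltey _).
have iQ := Qint hint hps sp hf.
have Hp' := H1 p' sp'.
have EQ x : Q r pstar p' x = (- s) * Q r pstar p x + (1 - (- s)).
  rewrite /Q /Dv /p' dotv_lin; field.
  by rewrite gt_eqF // Dpos.
have E2 : (\int[P]_x (Q r pstar p' x)%:E = \int[P]_x ((- s) * Q r pstar p x + (1 - (- s)))%:E)%E.
  by apply: eq_integral => x _; rewrite EQ.
have iQ' := int_aff (- s) (1 - (- s)) iQ.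
rewrite E2 (Efin_int iQ') Rint_aff // in Hp'.
rewrite lee_fin !dotvB /p' dotv_lin in Hp'.
rewrite Efin_int // lee_fin dotvB in Hp.
rewrite Efin_int // dotvB; congr EFin.
apply/eqP; rewrite eq_le Hp /=.
have : s * (1 + (dotv p (meanv P r) - dotv pstar (meanv P r)) - Rintegral P setT (Q r pstar p)) <= 0.
  move: Hp'; set a := dotv p _; set b := dotv pstar _; set I := Rintegral _ _ _.
  move=> Hp'; have -> : s * (1 + (a - b) - I) = - s * I + (1 - - s) - (1 + ((1 - - s) * b + - s * a - b)) by ring.
  lra.
rewrite pmulr_rle0 //; lra.
Qed.

End S6.

Theorem mainTheorem19 (d : measure_display) (T : measurableType d) (R : realType)
  (P : probability T R) (n : nat) (r : T -> 'I_n -> R)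
  (hn : (2 <= n)%N)
  (hint : forall i : 'I_n, P.-integrable setT (fun x => (r x i)%:E))
  (pstar : 'I_n -> R) (hpstar : simplex pstar) :
  (forall p : 'I_n -> R, simplex p -> (Jobj P r p <= Jobj P r pstar)%E)
  <->
  ((forall p : 'I_n -> R, simplex p ->
     ((\int[P]_x ((dotv p (expv (r x)) / dotv pstar (expv (r x)))%R%:E))
       <= (1 + dotv (fun i => p i - pstar i) (meanv P r))%R%:E)%E)
   /\
   (forall p : 'I_n -> R, simplex p -> supp_sub p pstar ->
     (\int[P]_x ((dotv p (expv (r x)) / dotv pstar (expv (r x)))%R%:E))%E
       = (1 + dotv (fun i => p i - pstar i) (meanv P r))%R%:E)).
Proof.
split.
- move=> H.
  have H1 : forall p, simplex p ->
    (\int[P]_x (Q r pstar p x)%:E <= (1 + dotv (fun i => p i - pstar i) (meanv P r))%:E)%E.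
    by move=> p sp; exact: (claim3 hint hpstar H sp).
  split; first exact: H1.
  by move=> p sp hs; exact: (part2 hint hpstar H1 sp hs).
- by move=> [H1 _]; exact: (dirA hint hpstar H1).
Qed.
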